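(* Let $(\mathscr{E},\mathscr{M})$ be a $\mathscr{V}$-prefactorization-system on a cotensored $\mathscr{V}$-category $\mathscr{B}$ with $\mathscr{M}\subseteq\mathsf{Mono}_\mathscr{V}\mathscr{B}$. Suppose $\mathscr{B}$ has arbitrary $\mathscr{V}$-intersections of $\mathscr{M}$-morphisms and $\mathscr{V}$-pullbacks of $\mathscr{M}$-morphisms along arbitrary morphisms. Then: (1) $(\mathscr{E},\mathscr{M})$ is a $\mathscr{V}$-factorization-system on $\mathscr{B}$; (2) for any class $\Sigma$ of morphisms in $\mathscr{B}$, letting $\mathscr{N}:=\Sigma^{\downarrow_\mathscr{V}}\cap\mathscr{M}$, the pair $(\mathscr{N}^{\uparrow_\mathscr{V}},\mathscr{N})$ is a $\mathscr{V}$-factorization-system on $\mathscr{B}$.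
   Context: $\mathscr{V}$ is a closed symmetric monoidal category (no limits assumed). $\mathsf{Mono}_\mathscr{V}\mathscr{B}$ is the class of $m$ with $\mathscr{B}(A,m)$ mono in $\mathscr{V}$ for all $A$. $\mathscr{V}$-limits are cones sent by every $\mathscr{B}(A,-):\mathscr{B}\to\mathscr{V}$ to limit cones; a $\mathscr{V}$-intersection of a class-indexed family of $\mathscr{V}$-monos with common codomain is its $\mathscr{V}$-fibre-product (wide $\mathscr{V}$-pullback). For $e:A_1\to A_2$, $m:B_1\to B_2$, $e\downarrow_\mathscr{V} m$ means the square formed by $\mathscr{B}(A_2,m)$, $\mathscr{B}(A_1,m)$, $\mathscr{B}(e,B_1)$, $\mathscr{B}(e,B_2)$ is a pullback in $\mathscr{V}$. $\Sigma^{\downarrow_\mathscr{V}}=\{m: e\downarrow_\mathscr{V} m\ \forall e\in\Sigma\}$, $\mathscr{N}^{\uparrow_\mathscr{V}}=\{e: e\downarrow_\mathscr{V} m\ \forall m\in\mathscr{N}\}$. A $\mathscr{V}$-prefactorization-system is a pair $(\mathscr{E},\mathscr{M})$ with $\mathscr{E}^{\downarrow_\mathscr{V}}=\mathscr{M}$, $\mathscr{M}^{\uparrow_\mathscr{V}}=\mathscr{E}$; a $\mathscr{V}$-factorization-system additionally assigns each morphism a factorization $m\cdot e$ with $e\in\mathscr{E}$, $m\in\mathscr{M}$. *)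

(* Defs.v *)
Record Cat := {
  ob :> Type;
  hom : ob -> ob -> Type;
  idm : forall A, hom A A;
  cmp : forall A B C, hom B C -> hom A B -> hom A C;
  cmp_assoc : forall A B C D (h : hom C D) (g : hom B C) (f : hom A B),
      cmp A C D h (cmp A B C g f) = cmp A B D (cmp B C D h g) f;
  cmp_id_l : forall A B (f : hom A B), cmp A B B (idm B) f = f;
  cmp_id_r : forall A B (f : hom A B), cmp A A B f (idm A) = f
}.
Arguments hom {c} _ _.
Arguments idm {c} _.
Arguments cmp {c A B C} _ _.
Notation "g ∘ f" := (cmp g f) (at level 40, left associativity).

Definition is_iso {V : Cat} {A B : V} (f : hom A B) : Prop :=
  exists g : hom B A, g ∘ f = idm A /\ f ∘ g = idm B.

Definition is_mono {V : Cat} {A B : V} (f : hom A B) : Prop :=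
  forall X (g h : hom X A), f ∘ g = f ∘ h -> g = h.

Definition is_pullback {V : Cat} {P X Y Z : V}
  (p1 : hom P X) (p2 : hom P Y) (f : hom X Z) (g : hom Y Z) : Prop :=
  f ∘ p1 = g ∘ p2 /\
  forall Q (q1 : hom Q X) (q2 : hom Q Y), f ∘ q1 = g ∘ q2 ->
    exists u : hom Q P, p1 ∘ u = q1 /\ p2 ∘ u = q2 /\
      forall u' : hom Q P, p1 ∘ u' = q1 -> p2 ∘ u' = q2 -> u' = u.

Definition is_wide_pullback {V : Cat} {I : Type} {P Z : V} {X : I -> V}
  (q : hom P Z) (p : forall i, hom P (X i)) (f : forall i, hom (X i) Z) : Prop :=
  (forall i, f i ∘ p i = q) /\
  forall Q (r : hom Q Z) (s : forall i, hom Q (X i)),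
    (forall i, f i ∘ s i = r) ->
    exists u : hom Q P, q ∘ u = r /\ (forall i, p i ∘ u = s i) /\
      forall u' : hom Q P, q ∘ u' = r -> (forall i, p i ∘ u' = s i) -> u' = u.

Record SMC (V : Cat) := {
  tens : V -> V -> V;
  tens_hom : forall A A' B B', hom A A' -> hom B B' -> hom (tens A B) (tens A' B');
  tens_id : forall A B, tens_hom A A B B (idm A) (idm B) = idm (tens A B);
  tens_comp : forall A A' A'' B B' B'' (f : hom A A') (f' : hom A' A'')
      (g : hom B B') (g' : hom B' B''),
      tens_hom A A'' B B'' (f' ∘ f) (g' ∘ g)
      = tens_hom A' A'' B' B'' f' g' ∘ tens_hom A A' B B' f g;
  unit : V;
  assoc : forall A B C, hom (tens (tens A B) C) (tens A (tens B C));
  assoc_inv : forall A B C, hom (tens A (tens B C)) (tens (tens A B) C);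
  assoc_inv_l : forall A B C, assoc_inv A B C ∘ assoc A B C = idm _;
  assoc_inv_r : forall A B C, assoc A B C ∘ assoc_inv A B C = idm _;
  assoc_nat : forall A A' B B' C C' (f : hom A A') (g : hom B B') (h : hom C C'),
      assoc A' B' C' ∘ tens_hom _ _ _ _ (tens_hom _ _ _ _ f g) h
      = tens_hom _ _ _ _ f (tens_hom _ _ _ _ g h) ∘ assoc A B C;
  lunit : forall A, hom (tens unit A) A;
  lunit_inv : forall A, hom A (tens unit A);
  lunit_inv_l : forall A, lunit_inv A ∘ lunit A = idm _;
  lunit_inv_r : forall A, lunit A ∘ lunit_inv A = idm _;
  lunit_nat : forall A A' (f : hom A A'),
      lunit A' ∘ tens_hom _ _ _ _ (idm unit) f = f ∘ lunit A;
  runit : forall A, hom (tens A unit) A;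
  runit_inv : forall A, hom A (tens A unit);
  runit_inv_l : forall A, runit_inv A ∘ runit A = idm _;
  runit_inv_r : forall A, runit A ∘ runit_inv A = idm _;
  runit_nat : forall A A' (f : hom A A'),
      runit A' ∘ tens_hom _ _ _ _ f (idm unit) = f ∘ runit A;
  pentagon : forall A B C D,
      tens_hom _ _ _ _ (idm A) (assoc B C D) ∘ assoc A (tens B C) D
        ∘ tens_hom _ _ _ _ (assoc A B C) (idm D)
      = assoc A B (tens C D) ∘ assoc (tens A B) C D;
  triangle : forall A B,
      tens_hom _ _ _ _ (idm A) (lunit B) ∘ assoc A unit B
      = tens_hom _ _ _ _ (runit A) (idm B);
  sym : forall A B, hom (tens A B) (tens B A);
  sym_nat : forall A A' B B' (f : hom A A') (g : hom B B'),
      sym A' B' ∘ tens_hom _ _ _ _ f g = tens_hom _ _ _ _ g f ∘ sym A B;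
  sym_inv : forall A B, sym B A ∘ sym A B = idm _;
  hexagon : forall A B C,
      assoc B C A ∘ sym A (tens B C) ∘ assoc A B C
      = tens_hom _ _ _ _ (idm B) (sym A C) ∘ assoc B A C
          ∘ tens_hom _ _ _ _ (sym A B) (idm C);
  ihom : V -> V -> V;
  ev : forall B C, hom (tens (ihom B C) B) C;
  curry : forall A B C, hom (tens A B) C -> hom A (ihom B C);
  ev_curry : forall A B C (f : hom (tens A B) C),
      ev B C ∘ tens_hom _ _ _ _ (curry A B C f) (idm B) = f;
  curry_unique : forall A B C (f : hom (tens A B) C) (g : hom A (ihom B C)),
      ev B C ∘ tens_hom _ _ _ _ g (idm B) = f -> g = curry A B C f
}.
Arguments tens {V} _ _ _.
Arguments tens_hom {V} _ {A A' B B'} _ _.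
Arguments unit {V} _.
Arguments assoc {V} _ _ _ _.
Arguments assoc_inv {V} _ _ _ _.
Arguments lunit {V} _ _.
Arguments lunit_inv {V} _ _.
Arguments runit {V} _ _.
Arguments runit_inv {V} _ _.
Arguments sym {V} _ _ _.
Arguments ihom {V} _ _ _.
Arguments ev {V} _ _ _.
Arguments curry {V} _ {A B C} _.

Record VCat {V : Cat} (W : SMC V) := {
  vob : Type;
  vhom : vob -> vob -> V;
  vcomp : forall A B C, hom (tens W (vhom B C) (vhom A B)) (vhom A C);
  vid : forall A, hom (unit W) (vhom A A);
  vassoc : forall A B C D,
      vcomp A B D ∘ tens_hom W (vcomp B C D) (idm (vhom A B))
      = vcomp A C D ∘ tens_hom W (idm (vhom C D)) (vcomp A B C)
          ∘ assoc W (vhom C D) (vhom B C) (vhom A B);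
  vunit_l : forall A B,
      vcomp A B B ∘ tens_hom W (vid B) (idm (vhom A B)) = lunit W (vhom A B);
  vunit_r : forall A B,
      vcomp A A B ∘ tens_hom W (idm (vhom A B)) (vid A) = runit W (vhom A B)
}.
Arguments vob {V W} _.
Arguments vhom {V W} _ _ _.
Arguments vcomp {V W} _ _ _ _.
Arguments vid {V W} _ _.

Section Enriched.
Context {V : Cat} {W : SMC V} (B : VCat W).

(* morphisms of the underlying ordinary category B_0 *)
Definition U0 (A C : vob B) : Type := hom (unit W) (vhom B A C).

Definition comp0 {A1 A2 A3 : vob B} (g : U0 A2 A3) (f : U0 A1 A2) : U0 A1 A3 :=
  vcomp B A1 A2 A3 ∘ tens_hom W g f ∘ lunit_inv W (unit W).

Definition homL (A : vob B) {B1 B2 : vob B} (m : U0 B1 B2)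
  : hom (vhom B A B1) (vhom B A B2) :=
  vcomp B A B1 B2 ∘ tens_hom W m (idm (vhom B A B1)) ∘ lunit_inv W (vhom B A B1).

Definition homR {A1 A2 : vob B} (e : U0 A1 A2) (C : vob B)
  : hom (vhom B A2 C) (vhom B A1 C) :=
  vcomp B A1 A2 C ∘ tens_hom W (idm (vhom B A2 C)) e ∘ runit_inv W (vhom B A2 C).

Definition MorClass : Type := forall A C : vob B, U0 A C -> Prop.

Definition class_eq (C D : MorClass) : Prop :=
  forall X Y (f : U0 X Y), C X Y f <-> D X Y f.

Definition orthV {A1 A2 B1 B2 : vob B} (e : U0 A1 A2) (m : U0 B1 B2) : Prop :=
  is_pullback (homR e B1) (homL A2 m) (homL A1 m) (homR e B2).

Definition downV (S : MorClass) : MorClass :=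
  fun B1 B2 m => forall A1 A2 (e : U0 A1 A2), S A1 A2 e -> orthV e m.

Definition upV (N : MorClass) : MorClass :=
  fun A1 A2 e => forall B1 B2 (m : U0 B1 B2), N B1 B2 m -> orthV e m.

Definition V_prefactorization_system (E M : MorClass) : Prop :=
  class_eq (downV E) M /\ class_eq (upV M) E.

Definition V_factorization_system (E M : MorClass) : Prop :=
  V_prefactorization_system E M /\
  forall X Y (f : U0 X Y), exists Z (e : U0 X Z) (m : U0 Z Y),
    E X Z e /\ M Z Y m /\ f = comp0 m e.

Definition MonoV {B1 B2 : vob B} (m : U0 B1 B2) : Prop :=
  forall A, is_mono (homL A m).

Definition is_V_intersection {I : Type} {C : vob B} {A : I -> vob B}
  (m : forall i, U0 (A i) C) (P : vob B) (q : U0 P C) (p : forall i, U0 P (A i))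
  : Prop :=
  (forall i, comp0 (m i) (p i) = q) /\
  forall D, is_wide_pullback (homL D q) (fun i => homL D (p i)) (fun i => homL D (m i)).

Definition has_V_intersections (M : MorClass) : Prop :=
  forall (I : Type) (C : vob B) (A : I -> vob B) (m : forall i, U0 (A i) C),
    (forall i, M (A i) C (m i)) ->
    exists P (q : U0 P C) (p : forall i, U0 P (A i)), is_V_intersection m P q p.

Definition has_V_pullbacks_of (M : MorClass) : Prop :=
  forall X Y Z (m : U0 X Z) (f : U0 Y Z), M X Z m ->
    exists P (p1 : U0 P X) (p2 : U0 P Y),
      comp0 m p1 = comp0 f p2 /\
      forall D, is_pullback (homL D p1) (homL D p2) (homL D m) (homL D f).

(* cotensors: for X in V and C in B, an object {X,C} with counit
   k : X -> B({X,C}, C) such that the induced B(A,{X,C}) -> [X, B(A,C)] is iso *)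
Definition is_cotensor (X : V) (C P : vob B) (k : hom X (vhom B P C)) : Prop :=
  forall A : vob B,
    is_iso (curry W (vcomp B A P C ∘ sym W (vhom B A P) (vhom B P C)
                       ∘ tens_hom W (idm (vhom B A P)) k)).

Definition cotensored : Prop :=
  forall (X : V) (C : vob B), exists P (k : hom X (vhom B P C)), is_cotensor X C P k.

End Enriched.

(* Main.v *)
Require Import Defs.
From Stdlib Require Import Setoid IndefiniteDescription.

Ltac nl := repeat rewrite cmp_assoc.
Ltac nr := repeat rewrite <- cmp_assoc.

Section Mon.
Context {V : Cat} (W : SMC V).
Local Notation "f ⊗ g" := (tens_hom W f g) (at level 35).


Lemma cancel_r {A B C : V} (x y : hom B C) (l : hom A B) (li : hom B A) :
  l ∘ li = idm B -> x ∘ l = y ∘ l -> x = y.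
Proof. intros H E. rewrite <- (cmp_id_r _ _ _ x), <- (cmp_id_r _ _ _ y), <- H, !cmp_assoc, E. reflexivity. Qed.

Lemma cancel_l {A B C : V} (x y : hom C A) (l : hom A B) (li : hom B A) :
  li ∘ l = idm A -> l ∘ x = l ∘ y -> x = y.
Proof. intros H E. rewrite <- (cmp_id_l _ _ _ x), <- (cmp_id_l _ _ _ y), <- H, <- !cmp_assoc, E. reflexivity. Qed.

Lemma ext2 {A B C D : V} (a : hom B C) (b : hom A B) (c : hom A C) :
  a ∘ b = c -> forall (x : hom C D), x ∘ a ∘ b = x ∘ c.
Proof. intros H x. rewrite <- cmp_assoc, H. reflexivity. Qed.

Lemma tc {A A' A'' B B' B'' : V} (f : hom A A') (f' : hom A' A'') (g : hom B B') (g' : hom B' B'') :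
  (f' ⊗ g') ∘ (f ⊗ g) = (f' ∘ f) ⊗ (g' ∘ g).
Proof. symmetry. apply tens_comp. Qed.

Lemma tcl {A A' A'' B : V} (f : hom A A') (f' : hom A' A'') :
  (f' ∘ f) ⊗ idm B = (f' ⊗ idm B) ∘ (f ⊗ idm B).
Proof. rewrite tc, cmp_id_l. reflexivity. Qed.

Lemma tcr {A B B' B'' : V} (g : hom B B') (g' : hom B' B'') :
  idm A ⊗ (g' ∘ g) = (idm A ⊗ g') ∘ (idm A ⊗ g).
Proof. rewrite tc, cmp_id_l. reflexivity. Qed.

Lemma tid (A B : V) : idm A ⊗ idm B = idm (tens W A B).
Proof. apply tens_id. Qed.

Lemma tsplit {A A' B B' : V} (f : hom A A') (g : hom B B') :
  f ⊗ g = (f ⊗ idm B') ∘ (idm A ⊗ g).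
Proof. rewrite tc, cmp_id_l, cmp_id_r. reflexivity. Qed.

Lemma tsplit' {A A' B B' : V} (f : hom A A') (g : hom B B') :
  f ⊗ g = (idm A' ⊗ g) ∘ (f ⊗ idm B).
Proof. rewrite tc, cmp_id_l, cmp_id_r. reflexivity. Qed.

Lemma inv_nat {A B A' B' : V} (l : hom A B) (li : hom B A) (l' : hom A' B') (li' : hom B' A')
  (F : hom A A') (f : hom B B') :
  l ∘ li = idm _ -> li' ∘ l' = idm _ -> l' ∘ F = f ∘ l -> F ∘ li = li' ∘ f.
Proof.
  intros H1 H2 H3.
  rewrite <- (cmp_id_l _ _ _ (F ∘ li)), <- H2.
  rewrite <- !cmp_assoc. rewrite (cmp_assoc _ _ _ _ _ l' F li), H3.
  rewrite <- cmp_assoc, H1, cmp_id_r. reflexivity.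
Qed.

Lemma lunit_inv_nat {A A' : V} (f : hom A A') :
  lunit_inv W A' ∘ f = (idm (unit W) ⊗ f) ∘ lunit_inv W A.
Proof. symmetry. eapply inv_nat. apply lunit_inv_r. apply lunit_inv_l. apply lunit_nat. Qed.

Lemma runit_inv_nat {A A' : V} (f : hom A A') :
  runit_inv W A' ∘ f = (f ⊗ idm (unit W)) ∘ runit_inv W A.
Proof. symmetry. eapply inv_nat. apply runit_inv_r. apply runit_inv_l. apply runit_nat. Qed.

Lemma assoc_inv_nat {A A' B B' C C' : V} (f : hom A A') (g : hom B B') (h : hom C C') :
  assoc_inv W A' B' C' ∘ (f ⊗ (g ⊗ h)) = ((f ⊗ g) ⊗ h) ∘ assoc_inv W A B C.
Proof. symmetry. eapply inv_nat. apply assoc_inv_r. apply assoc_inv_l. apply assoc_nat. Qed.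

Lemma tens_id_r_inj {A B : V} (f g : hom A B) : f ⊗ idm (unit W) = g ⊗ idm (unit W) -> f = g.
Proof.
  intro H. apply (cancel_r f g (runit W A) (runit_inv W A)). apply runit_inv_r.
  rewrite <- !runit_nat, H. reflexivity.
Qed.

Lemma tens_id_l_inj {A B : V} (f g : hom A B) : idm (unit W) ⊗ f = idm (unit W) ⊗ g -> f = g.
Proof.
  intro H. apply (cancel_r f g (lunit W A) (lunit_inv W A)). apply lunit_inv_r.
  rewrite <- !lunit_nat, H. reflexivity.
Qed.

Lemma kelly_r (X Y : V) :
  (idm X ⊗ runit W Y) ∘ assoc W X Y (unit W) = runit W (tens W X Y).
Proof.
  symmetry. apply tens_id_r_inj.
  apply (cancel_l _ _ (assoc W X Y (unit W)) (assoc_inv W X Y (unit W))). apply assoc_inv_l.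
  rewrite <- (triangle _ W (tens W X Y) (unit W)).
  rewrite cmp_assoc, <- (tid X Y), assoc_nat.
  rewrite <- cmp_assoc, <- pentagon.
  nl. rewrite tc, cmp_id_l, triangle.
  rewrite tcl, cmp_assoc, assoc_nat. reflexivity.
Qed.
Lemma ext3 {A B C D E : V} (a : hom C D) (b : hom B C) (c : hom A B) (d : hom A D) :
  a ∘ b ∘ c = d -> forall (x : hom D E), x ∘ a ∘ b ∘ c = x ∘ d.
Proof. intros H x. rewrite <- H, !cmp_assoc. reflexivity. Qed.

Lemma kelly_l (X Y : V) :
  lunit W (tens W X Y) ∘ assoc W (unit W) X Y = lunit W X ⊗ idm Y.
Proof.
  apply tens_id_l_inj.
  apply (cancel_r _ _ (assoc W (unit W) (tens W (unit W) X) Y ∘ (assoc W (unit W) (unit W) X ⊗ idm Y))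
     ((assoc_inv W (unit W) (unit W) X ⊗ idm Y) ∘ assoc_inv W (unit W) (tens W (unit W) X) Y)).
  { rewrite cmp_assoc. rewrite <- (cmp_assoc _ _ _ _ _ (assoc W _ _ _)).
    rewrite tc, assoc_inv_r, cmp_id_l, tid, cmp_id_r, assoc_inv_r. reflexivity. }
  rewrite tcr. nl. rewrite (ext3 _ _ _ _ (pentagon _ W (unit W) (unit W) X Y)).
  nl. rewrite triangle, <- (tid X Y), <- assoc_nat, <- triangle, tcl. nl.
  rewrite assoc_nat. reflexivity.
Qed.

Lemma runit_lunit_I : runit W (unit W) = lunit W (unit W).
Proof.
  apply tens_id_r_inj. rewrite <- triangle.
  assert (E : idm (unit W) ⊗ lunit W (unit W) = lunit W (tens W (unit W) (unit W))).
  { apply (cancel_l _ _ (lunit W (unit W)) (lunit_inv W _)). apply lunit_inv_l.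
    rewrite lunit_nat. reflexivity. }
  rewrite E, kelly_l. reflexivity.
Qed.
Lemma inv_unique {A B : V} (l : hom A B) (li : hom B A) (x : hom B A) :
  li ∘ l = idm A -> l ∘ x = idm B -> x = li.
Proof. intros H1 H2. rewrite <- (cmp_id_l _ _ _ x), <- H1, <- cmp_assoc, H2, cmp_id_r. reflexivity. Qed.

Lemma AL (X Y : V) : assoc W (unit W) X Y ∘ (lunit_inv W X ⊗ idm Y) = lunit_inv W (tens W X Y).
Proof.
  apply (inv_unique (lunit W (tens W X Y))). apply lunit_inv_l.
  rewrite cmp_assoc, kelly_l, tc, lunit_inv_r, cmp_id_l, tid. reflexivity.
Qed.

Lemma AR (X Y : V) : assoc_inv W X Y (unit W) ∘ (idm X ⊗ runit_inv W Y) = runit_inv W (tens W X Y).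
Proof.
  apply (inv_unique (runit W (tens W X Y))). apply runit_inv_l.
  rewrite <- kelly_r. rewrite cmp_assoc. rewrite <- (cmp_assoc _ _ _ _ _ (_ ⊗ _) (assoc W _ _ _)).
  rewrite assoc_inv_r, cmp_id_r, tc, runit_inv_r, cmp_id_l, tid. reflexivity.
Qed.

Lemma AT (X Y : V) : assoc W X (unit W) Y ∘ (runit_inv W X ⊗ idm Y) = idm X ⊗ lunit_inv W Y.
Proof.
  apply (inv_unique (idm X ⊗ lunit W Y)).
  { rewrite tc, lunit_inv_l, cmp_id_l, tid. reflexivity. }
  rewrite cmp_assoc, triangle, tc, runit_inv_r, cmp_id_l, tid. reflexivity.
Qed.

Lemma lunit_runit_inv_I : lunit_inv W (unit W) = runit_inv W (unit W).
Proof.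
  apply (inv_unique (runit W (unit W))). apply runit_inv_l.
  rewrite runit_lunit_I. apply lunit_inv_r.
Qed.
Lemma tswap {A A' B B' : V} (f : hom A A') (g : hom B B') :
  (idm A' ⊗ g) ∘ (f ⊗ idm B) = (f ⊗ idm B') ∘ (idm A ⊗ g).
Proof. rewrite !tc, !cmp_id_l, !cmp_id_r. reflexivity. Qed.

Lemma ev_curry' {A B C : V} (f : hom (tens W A B) C) : ev W B C ∘ (curry W f ⊗ idm B) = f.
Proof. apply ev_curry. Qed.

Lemma curry_ev {A B C : V} (y : hom A (ihom W B C)) : curry W (ev W B C ∘ (y ⊗ idm B)) = y.
Proof. symmetry. apply curry_unique. reflexivity. Qed.

Lemma curry_inj {A B C : V} (x y : hom A (ihom W B C)) :
  ev W B C ∘ (x ⊗ idm B) = ev W B C ∘ (y ⊗ idm B) -> x = y.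
Proof. intro H. rewrite <- (curry_ev x), <- (curry_ev y), H. reflexivity. Qed.

Lemma curry_nat {A A' B C : V} (f : hom (tens W A B) C) (g : hom A' A) :
  curry W f ∘ g = curry W (f ∘ (g ⊗ idm B)).
Proof. apply curry_unique. rewrite tcl, cmp_assoc, ev_curry'. reflexivity. Qed.

Definition T {X Y : V} (Q : V) (h : hom X Y) : hom (ihom W Q X) (ihom W Q Y) :=
  curry W (h ∘ ev W Q X).

Lemma T_curry {A Q X Y : V} (h : hom X Y) (F : hom (tens W A Q) X) :
  T Q h ∘ curry W F = curry W (h ∘ F).
Proof. apply curry_unique. rewrite tcl, cmp_assoc. unfold T. rewrite ev_curry'.
  rewrite <- cmp_assoc, ev_curry'. reflexivity. Qed.
End Mon.


Ltac rw_ E := first [rewrite E | rewrite (ext2 _ _ _ E) | rewrite (ext3 _ _ _ _ E)]; nl.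
Tactic Notation "rw" open_constr(E) := rw_ E.

Section Enr.
Context {V : Cat} {W : SMC V} (B : VCat W).
Local Notation "f ⊗ g" := (tens_hom W f g) (at level 35).
Local Notation vc := (vcomp B).
Local Notation vh := (vhom B).


Lemma vassoc' A B' C D :
  vc A C D ∘ (idm (vh C D) ⊗ vc A B' C)
  = vc A B' D ∘ (vc B' C D ⊗ idm (vh A B')) ∘ assoc_inv W (vh C D) (vh B' C) (vh A B').
Proof.
  rewrite vassoc. rewrite <- cmp_assoc, assoc_inv_r, cmp_id_r. reflexivity.
Qed.

Lemma L1 A B' C D (h : U0 B C D) :
  vc A B' D ∘ (homL B B' h ⊗ idm (vh A B')) = homL B A h ∘ vc A B' C.
Proof.
  unfold homL. rewrite !tcl. nl. rewrite vassoc. nl.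
  rw (assoc_nat _ W _ _ _ _ _ _ h (idm (vh B' C)) (idm (vh A B'))).
  rw (AL W (vh B' C) (vh A B')). rewrite tid.
  rw (tswap W h (vc A B' C)).
  rw (eq_sym (lunit_inv_nat W (vc A B' C))). reflexivity.
Qed.

Lemma L2 A1 A2 B' C (e : U0 B A1 A2) :
  vc A1 B' C ∘ (idm (vh B' C) ⊗ homR B e B') = homR B e C ∘ vc A2 B' C.
Proof.
  unfold homR. rewrite !tcr. nl. rewrite vassoc'. nl.
  rw (assoc_inv_nat W (idm (vh B' C)) (idm (vh A2 B')) e).
  rw (AR W (vh B' C) (vh A2 B')). rewrite tid.
  rw (eq_sym (tswap W (vc A2 B' C) e)).
  rw (eq_sym (runit_inv_nat W (vc A2 B' C))). reflexivity.
Qed.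

Lemma L3 A B1 B2 D (g : U0 B B1 B2) :
  vc A B1 D ∘ (homR B g D ⊗ idm (vh A B1)) = vc A B2 D ∘ (idm (vh B2 D) ⊗ homL B A g).
Proof.
  unfold homR, homL. rewrite !tcl, !tcr. nl. rewrite vassoc. nl.
  rw (assoc_nat _ W _ _ _ _ _ _ (idm (vh B2 D)) g (idm (vh A B1))).
  rw (AT W (vh B2 D) (vh A B1)). reflexivity.
Qed.

Lemma El_L A C D (h : U0 B C D) (x : U0 B A C) : homL B A h ∘ x = comp0 B h x.
Proof.
  unfold homL, comp0. rw (lunit_inv_nat W x). rw (tc W _ _ _ _). rewrite cmp_id_l, cmp_id_r. reflexivity.
Qed.

Lemma El_R A1 A2 C (e : U0 B A1 A2) (y : U0 B A2 C) : homR B e C ∘ y = comp0 B y e.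
Proof.
  unfold homR, comp0. rw (runit_inv_nat W y). rw (tc W _ _ _ _). rewrite cmp_id_l, cmp_id_r.
  rewrite lunit_runit_inv_I. reflexivity.
Qed.

Lemma homL_comp A X Y Z (h : U0 B Y Z) (g : U0 B X Y) :
  homL B A (comp0 B h g) = homL B A h ∘ homL B A g.
Proof.
  unfold homL at 3. nl. rewrite <- L1. rw (eq_sym (tcl W _ _)). rewrite El_L. reflexivity.
Qed.

Lemma homR_comp X Y Z C (g : U0 B Y Z) (f : U0 B X Y) :
  homR B (comp0 B g f) C = homR B f C ∘ homR B g C.
Proof.
  unfold homR at 3. nl. rewrite <- L2. rw (eq_sym (tcr W _ _)). rewrite El_R. reflexivity.
Qed.

Lemma comp0_assoc X Y Z T (h : U0 B Z T) (g : U0 B Y Z) (f : U0 B X Y) :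
  comp0 B (comp0 B h g) f = comp0 B h (comp0 B g f).
Proof.
  rewrite <- (El_L _ _ _ (comp0 B h g) f), <- (El_L _ _ _ h (comp0 B g f)), homL_comp, <- (El_L _ _ _ g f), cmp_assoc.
  reflexivity.
Qed.

Lemma homL_id A C : homL B A (vid B C) = idm _.
Proof. unfold homL. rewrite vunit_l, lunit_inv_r. reflexivity. Qed.

Lemma homR_id A C : homR B (vid B A) C = idm _.
Proof. unfold homR. rewrite vunit_r, runit_inv_r. reflexivity. Qed.

Lemma comp0_id_r X Y (m : U0 B X Y) : comp0 B m (vid B X) = m.
Proof. rewrite <- El_R, homR_id, cmp_id_l. reflexivity. Qed.

Lemma commLR A1 A2 C1 C2 (e : U0 B A1 A2) (m : U0 B C1 C2) :
  homR B e C2 ∘ homL B A2 m = homL B A1 m ∘ homR B e C1.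
Proof.
  unfold homL at 1. nl. rewrite <- L2.
  rw (tswap W m (homR B e C1)).
  rw (eq_sym (lunit_inv_nat W (homR B e C1))). reflexivity.
Qed.
End Enr.



Lemma paste {V : Cat} {P X Y Z Y' Z' : V} (p1 : hom P X) (p2 : hom P Y) (f : hom X Z) (g : hom Y Z)
  (q2 : hom Y Y') (f' : hom Z Z') (g' : hom Y' Z') :
  is_pullback p1 p2 f g -> is_pullback g q2 f' g' -> is_pullback p1 (q2 ∘ p2) (f' ∘ f) g'.
Proof.
  intros [c1 H1] [c2 H2]. split.
  { nr. rewrite c1. nl. rewrite c2. reflexivity. }
  intros Q r1 r2 Hr.
  destruct (H2 Q (f ∘ r1) r2) as [v [Hv1 [Hv2 Hvu]]]. { nl. exact Hr. }
  destruct (H1 Q r1 v) as [u [Hu1 [Hu2 Huu]]]. { symmetry. exact Hv1. }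
  exists u. split; [exact Hu1|split].
  { nr. rewrite Hu2. exact Hv2. }
  intros u' E1 E2. apply Huu; [exact E1|].
  apply Hvu.
  - nl. rewrite <- c1. nr. rewrite E1. reflexivity.
  - rewrite cmp_assoc. exact E2.
Qed.

Section Cls.
Context {V : Cat} {W : SMC V} (B : VCat W).

Lemma orth_comp {A1 A2 B1 B2 B3} (e : U0 B A1 A2) (m1 : U0 B B1 B2) (m2 : U0 B B2 B3) :
  orthV B e m1 -> orthV B e m2 -> orthV B e (comp0 B m2 m1).
Proof.
  unfold orthV. intros H1 H2. rewrite !homL_comp. eapply paste; eassumption.
Qed.

Lemma orth_pb {A1 A2 X Y Z R} (e : U0 B A1 A2) (m : U0 B X Z) (h : U0 B Y Z)
  (p1 : U0 B R X) (p2 : U0 B R Y) :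
  (forall D, is_pullback (homL B D p1) (homL B D p2) (homL B D m) (homL B D h)) ->
  orthV B e m -> orthV B e p2.
Proof.
  intros Hpb [cm Hm]. split.
  { symmetry. apply commLR. }
  intros Q q1 q2 Hq.
  destruct (Hm Q (homL B A1 p1 ∘ q1) (homL B A2 h ∘ q2)) as [w [Hw1 [Hw2 Hwu]]].
  { nl. rewrite (proj1 (Hpb A1)). nr. rewrite Hq. nl. rewrite commLR. reflexivity. }
  destruct (proj2 (Hpb A2) Q w q2) as [u [Hu1 [Hu2 Huu]]]. { exact Hw2. }
  destruct (proj2 (Hpb A1) Q (homL B A1 p1 ∘ q1) (homL B A1 p2 ∘ q1)) as [u0 [_ [_ Hu0]]].
  { nl. rewrite (proj1 (Hpb A1)). reflexivity. }
  exists u. split; [|split; [exact Hu2|]].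
  { rewrite (Hu0 (homR B e R ∘ u)), (Hu0 q1); try reflexivity.
    - nl. rewrite <- (commLR B _ _ _ _ e p1). nr. rewrite Hu1. exact Hw1.
    - nl. rewrite <- commLR. nr. rewrite Hu2. symmetry. exact Hq. }
  intros u' E1 E2. apply Huu; [|exact E2].
  apply Hwu.
  - nl. rewrite commLR. nr. rewrite E1. reflexivity.
  - nl. rewrite (proj1 (Hpb A2)). nr. rewrite E2. reflexivity.
Qed.

Lemma orth_int {I : Type} {A1 A2 C : vob B} {A : I -> vob B} (e : U0 B A1 A2)
  (m : forall i, U0 B (A i) C) (P : vob B) (q : U0 B P C) (p : forall i, U0 B P (A i)) :
  is_V_intersection B m P q p -> (forall i, orthV B e (m i)) -> orthV B e q.
Proof.
  intros [_ Hw] Ho. split.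
  { symmetry. apply commLR. }
  intros Q x1 x2 Hx.
  assert (Hex : forall i, exists w : hom Q (vhom B A2 (A i)),
     homR B e (A i) ∘ w = homL B A1 (p i) ∘ x1 /\ homL B A2 (m i) ∘ w = x2 /\
     (forall w', homR B e (A i) ∘ w' = homL B A1 (p i) ∘ x1 -> homL B A2 (m i) ∘ w' = x2 -> w' = w)).
  { intro i. destruct (proj2 (Ho i) Q (homL B A1 (p i) ∘ x1) x2) as [w Hw'].
    - nl. rewrite (proj1 (Hw A1) i). exact Hx.
    - exists w. exact Hw'. }
  set (w := fun i => proj1_sig (constructive_indefinite_description _ (Hex i))).
  assert (Hws : forall i, homR B e (A i) ∘ w i = homL B A1 (p i) ∘ x1 /\ homL B A2 (m i) ∘ w i = x2 /\
     (forall w', homR B e (A i) ∘ w' = homL B A1 (p i) ∘ x1 -> homL B A2 (m i) ∘ w' = x2 -> w' = w i)).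
  { intro i. exact (proj2_sig (constructive_indefinite_description _ (Hex i))). }
  destruct (proj2 (Hw A2) Q x2 w) as [u [Hu1 [Hu2 Huu]]].
  { intro i. apply (Hws i). }
  destruct (proj2 (Hw A1) Q (homL B A1 q ∘ x1) (fun i => homL B A1 (p i) ∘ x1)) as [u0 [_ [_ Hu0]]].
  { intro i. nl. rewrite (proj1 (Hw A1) i). reflexivity. }
  exists u. split; [|split; [exact Hu1|]].
  { assert (X1 : x1 = u0) by (apply Hu0; [reflexivity | intro i; reflexivity]).
    assert (X2 : homR B e P ∘ u = u0).
    { apply Hu0.
      - nl. rewrite <- commLR. nr. rewrite Hu1. symmetry. exact Hx.
      - intro i. nl. rewrite <- commLR. nr. rewrite Hu2. apply (Hws i). }
    rewrite X1, X2. reflexivity. }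
  intros u' E1 E2. apply Huu; [exact E2|].
  intro i. apply (Hws i).
  - nl. rewrite commLR. nr. rewrite E1. reflexivity.
  - nl. rewrite (proj1 (Hw A2) i). exact E2.
Qed.
End Cls.



Section Cot.
Context {V : Cat} {W : SMC V} (B : VCat W).
Local Notation "f ⊗ g" := (tens_hom W f g) (at level 35).
Local Notation vh := (vhom B).

Definition Fc (Q : V) (C P : vob B) (k : hom Q (vh P C)) (A : vob B) : hom (tens W (vh A P) Q) (vh A C) :=
  vcomp B A P C ∘ sym W (vh A P) (vh P C) ∘ (idm (vh A P) ⊗ k).

Lemma Fc_ev Q C P k A {Z : V} (x : hom Z (vh A P)) :
  Fc Q C P k A ∘ (x ⊗ idm Q) = ev W Q (vh A C) ∘ ((curry W (Fc Q C P k A) ∘ x) ⊗ idm Q).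
Proof. rewrite tcl, cmp_assoc, ev_curry'. reflexivity. Qed.

Lemma Fc_inj Q C P k (Hc : is_cotensor B Q C P k) A {Z : V} (x y : hom Z (vh A P)) :
  Fc Q C P k A ∘ (x ⊗ idm Q) = Fc Q C P k A ∘ (y ⊗ idm Q) -> x = y.
Proof.
  rewrite !Fc_ev. intro H. apply curry_inj in H.
  destruct (Hc A) as [psi [H1 H2]].
  apply (cancel_l _ _ _ psi H1). exact H.
Qed.

Lemma Fc_surj Q C P k (Hc : is_cotensor B Q C P k) A {Z : V} (w : hom (tens W Z Q) (vh A C)) :
  exists u : hom Z (vh A P), Fc Q C P k A ∘ (u ⊗ idm Q) = w.
Proof.
  destruct (Hc A) as [psi [H1 H2]].
  exists (psi ∘ curry W w). rewrite Fc_ev. unfold Fc in *. rewrite cmp_assoc, H2, cmp_id_l, ev_curry'.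
  reflexivity.
Qed.

Lemma Fc_N1 Q C P k A1 A2 (e : U0 B A1 A2) :
  Fc Q C P k A1 ∘ (homR B e P ⊗ idm Q) = homR B e C ∘ Fc Q C P k A2.
Proof.
  unfold Fc. rw (tc W _ _ _ _). rewrite cmp_id_l, cmp_id_r.
  rw (sym_nat _ W _ _ _ _ (homR B e P) k). rewrite (tsplit' W k (homR B e P)).
  nl. rewrite L2. rw (sym_nat _ W _ _ _ _ (idm (vh A2 P)) k). reflexivity.
Qed.

Lemma Fc_N2 Q C1 C2 P1 P2 k1 k2 (m : U0 B C1 C2) (g : U0 B P1 P2)
  (Hg : homR B g C2 ∘ k2 = homL B P1 m ∘ k1) A :
  Fc Q C2 P2 k2 A ∘ (homL B A g ⊗ idm Q) = homL B A m ∘ Fc Q C1 P1 k1 A.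
Proof.
  unfold Fc. rw (tc W _ _ _ _). rewrite cmp_id_l, cmp_id_r.
  rw (sym_nat _ W _ _ _ _ (homL B A g) k2). rewrite (tsplit' W k2 (homL B A g)).
  nl. rewrite <- L3. rw (eq_sym (tcl W _ _)). rewrite Hg. rewrite tcl. nl. rewrite L1.
  rw (sym_nat _ W _ _ _ _ (idm (vh A P1)) k1). reflexivity.
Qed.

Lemma Fc_Phi Q C P k A (g : U0 B A P) :
  Fc Q C P k A ∘ (g ⊗ idm Q) = homR B g C ∘ k ∘ runit W Q ∘ sym W (unit W) Q.
Proof.
  unfold Fc, homR. rw (tc W _ _ _ _). rewrite cmp_id_l, cmp_id_r.
  rw (sym_nat _ W _ _ _ _ g k). rw (runit_inv_nat W k). rw (runit_inv_l _ W Q).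
  rewrite cmp_id_r. rw (tc W _ _ _ _). rewrite cmp_id_l, cmp_id_r. reflexivity.
Qed.

Lemma sigma_inv (Q : V) : (runit W Q ∘ sym W (unit W) Q) ∘ (sym W Q (unit W) ∘ runit_inv W Q) = idm Q.
Proof.
  nl. rw (sym_inv _ W Q (unit W)). rewrite cmp_id_r. apply runit_inv_r.
Qed.

Lemma Phi_inj Q C P k (Hc : is_cotensor B Q C P k) A (g g' : U0 B A P) :
  homR B g C ∘ k = homR B g' C ∘ k -> g = g'.
Proof.
  intro H. apply (Fc_inj Q C P k Hc). rewrite !Fc_Phi, H. reflexivity.
Qed.

Lemma Phi_surj Q C P k (Hc : is_cotensor B Q C P k) A (h : hom Q (vh A C)) :
  exists g : U0 B A P, homR B g C ∘ k = h.
Proof.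
  destruct (Fc_surj Q C P k Hc A (h ∘ (runit W Q ∘ sym W (unit W) Q))) as [g Hg].
  exists g. rewrite Fc_Phi in Hg.
  apply (cancel_r _ _ _ _ (sigma_inv Q)). nl. rewrite Hg. nl. reflexivity.
Qed.

Lemma orth_cot Q C1 C2 P1 P2 k1 k2 (Hc1 : is_cotensor B Q C1 P1 k1) (Hc2 : is_cotensor B Q C2 P2 k2)
  (m : U0 B C1 C2) (g : U0 B P1 P2) (Hg : homR B g C2 ∘ k2 = homL B P1 m ∘ k1)
  A1 A2 (e : U0 B A1 A2) : orthV B e m -> orthV B e g.
Proof.
  intros [cm Hm]. split.
  { symmetry. apply commLR. }
  intros Z x1 x2 Hx.
  destruct (Hm (tens W Z Q) (Fc Q C1 P1 k1 A1 ∘ (x1 ⊗ idm Q)) (Fc Q C2 P2 k2 A2 ∘ (x2 ⊗ idm Q)))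
    as [w [Hw1 [Hw2 Hwu]]].
  { nl. rewrite <- (Fc_N2 Q C1 C2 P1 P2 k1 k2 m g Hg). nr. rewrite <- tcl, Hx, tcl. nl.
    rewrite Fc_N1. reflexivity. }
  destruct (Fc_surj Q C1 P1 k1 Hc1 A2 w) as [u Hu].
  exists u. split; [|split].
  - apply (Fc_inj Q C1 P1 k1 Hc1). rewrite tcl. nl. rewrite Fc_N1. nr. rewrite Hu. exact Hw1.
  - apply (Fc_inj Q C2 P2 k2 Hc2). rewrite tcl. nl. rewrite (Fc_N2 Q C1 C2 P1 P2 k1 k2 m g Hg).
    nr. rewrite Hu. exact Hw2.
  - intros u' E1 E2. apply (Fc_inj Q C1 P1 k1 Hc1). rewrite Hu. apply Hwu.
    + nl. rewrite <- Fc_N1. nr. rewrite <- tcl, E1. reflexivity.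
    + nl. rewrite <- (Fc_N2 Q C1 C2 P1 P2 k1 k2 m g Hg). nr. rewrite <- tcl, E2. reflexivity.
Qed.
End Cot.



Lemma main_fact {V : Cat} {W : SMC V} (B : VCat W) (E M : MorClass B) :
  cotensored B ->
  V_prefactorization_system B E M ->
  (forall X Y (m : U0 B X Y), M X Y m -> MonoV B m) ->
  has_V_intersections B M ->
  has_V_pullbacks_of B M ->
  V_factorization_system B E M.
Proof.
  intros Hcot [HdE HuM] Hmono Hint Hpb. split; [split; assumption|].
  intros X Y f.
  set (I := {Z : vob B & {n : U0 B Z Y & {t : U0 B X Z | M Z Y n /\ comp0 B n t = f}}}).
  set (A := fun i : I => projT1 i).
  set (n := fun i : I => projT1 (projT2 i) : U0 B (A i) Y).
  set (t := fun i : I => proj1_sig (projT2 (projT2 i)) : U0 B X (A i)).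
  assert (Hn : forall i, M (A i) Y (n i)) by (intro i; exact (proj1 (proj2_sig (projT2 (projT2 i))))).
  assert (Ht : forall i, comp0 B (n i) (t i) = f) by (intro i; exact (proj2 (proj2_sig (projT2 (projT2 i))))).
  destruct (Hint I Y A n Hn) as [P [m [p Hi]]].
  assert (Hm : M P Y m).
  { apply HdE. intros A1 A2 e0 He0. apply (orth_int B e0 n P m p Hi).
    intro i. exact (proj2 (HdE _ _ _) (Hn i) _ _ e0 He0). }
  destruct Hi as [Hcone Hwp].
  destruct (proj2 (Hwp X) (unit W) f t) as [e [He1 [He2 _]]].
  { intro i. rewrite El_L. apply Ht. }
  exists P, e, m. split; [|split; [exact Hm|]].
  2:{ rewrite <- El_L. symmetry. exact He1. }
  apply HuM. intros B1 B2 m' Hm'. split.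
  { symmetry. apply commLR. }
  intros Q a b Hab.
  destruct (Hcot Q B1) as [P1 [k1 Hc1]]. destruct (Hcot Q B2) as [P2 [k2 Hc2]].
  destruct (Phi_surj B Q B2 P2 k2 Hc2 P1 (homL B P1 m' ∘ k1)) as [g Hg].
  destruct (Phi_surj B Q B1 P1 k1 Hc1 X a) as [abar Ha].
  destruct (Phi_surj B Q B2 P2 k2 Hc2 P b) as [bbar Hb].
  assert (Hgm : M P1 P2 g).
  { apply HdE. intros A1 A2 e0 He0.
    apply (orth_cot B Q B1 B2 P1 P2 k1 k2 Hc1 Hc2 m' g Hg).
    exact (proj2 (HdE _ _ _) Hm' _ _ e0 He0). }
  assert (Heq : comp0 B g abar = comp0 B bbar e).
  { apply (Phi_inj B Q B2 P2 k2 Hc2 X). rewrite !homR_comp. nr. rewrite Hg, Hb. nl.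
    rewrite commLR. nr. rewrite Ha. exact Hab. }
  destruct (Hpb P1 P P2 g bbar Hgm) as [R [p1 [p2 [Hc Hpbk]]]].
  assert (Hp2 : M R P p2).
  { apply HdE. intros A1 A2 e0 He0. apply (orth_pb B e0 g bbar p1 p2 Hpbk).
    exact (proj2 (HdE _ _ _) Hgm _ _ e0 He0). }
  assert (Hmp : M R Y (comp0 B m p2)).
  { apply HdE. intros A1 A2 e0 He0. apply orth_comp.
    - exact (proj2 (HdE _ _ _) Hp2 _ _ e0 He0).
    - exact (proj2 (HdE _ _ _) Hm _ _ e0 He0). }
  destruct (proj2 (Hpbk X) (unit W) abar e) as [tt [Ht1 [Ht2 _]]].
  { rewrite !El_L. exact Heq. }
  assert (Hf : comp0 B (comp0 B m p2) tt = f).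
  { rewrite comp0_assoc, <- (El_L B _ _ _ p2 tt), Ht2, <- El_L. exact He1. }
  set (i0 := existT (fun Z => {n : U0 B Z Y & {t : U0 B X Z | M Z Y n /\ comp0 B n t = f}})
               R (existT _ (comp0 B m p2) (exist _ tt (conj Hmp Hf))) : I).
  set (s := p i0 : U0 B P R).
  assert (Hs : comp0 B p2 s = vid B P).
  { apply (Hmono P Y m Hm P). rewrite !El_L, comp0_id_r, <- comp0_assoc. exact (Hcone i0). }
  assert (Hu2 : homL B P m' ∘ (homR B (comp0 B p1 s) B1 ∘ k1) = b).
  { nl. rewrite <- commLR. nr. rewrite <- Hg. nl. rewrite <- homR_comp.
    rewrite <- comp0_assoc, Hc, comp0_assoc, Hs, comp0_id_r. exact Hb. }
  exists (homR B (comp0 B p1 s) B1 ∘ k1). split; [|split; [exact Hu2|]].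
  - apply (Hmono B1 B2 m' Hm' X). rewrite Hab. nl. rewrite <- commLR. nr. rewrite Hu2. reflexivity.
  - intros u' _ E2. apply (Hmono B1 B2 m' Hm' P). rewrite E2, Hu2. reflexivity.
Qed.


Theorem corollary7p4 (V : Cat) (W : SMC V) (B : VCat W) (E M : MorClass B) :
  cotensored B ->
  V_prefactorization_system B E M ->
  (forall X Y (m : U0 B X Y), M X Y m -> MonoV B m) ->
  has_V_intersections B M ->
  has_V_pullbacks_of B M ->
  V_factorization_system B E M /\
  (forall Sigma : MorClass B,
     let N : MorClass B := fun X Y m => downV B Sigma X Y m /\ M X Y m in
     V_factorization_system B (upV B N) N).
Proof.
  intros Hcot Hpre Hmono Hint Hpb. split.
  { apply main_fact; assumption. }
  intros Sigma N. destruct Hpre as [HdE HuM].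
  apply main_fact.
  - exact Hcot.
  - split.
    + intros X Y m. split.
      * intro Hd. split.
        -- intros A1 A2 e He. apply Hd. intros B1 B2 m' [Hm'1 _]. exact (Hm'1 _ _ e He).
        -- apply HdE. intros A1 A2 e He. apply Hd. intros B1 B2 m' [_ Hm'2].
           exact (proj2 (HuM _ _ _) He _ _ m' Hm'2).
      * intros Hm A1 A2 e He. apply He. exact Hm.
    + intros X Y m. reflexivity.
  - intros X Y m [_ Hm]. exact (Hmono X Y m Hm).
  - intros I C A m Hm. apply Hint. intro i. exact (proj2 (Hm i)).
  - intros X Y Z m f [_ Hm]. exact (Hpb X Y Z m f Hm).
Qed.
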